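(* Let $r\ge1$, $L\ge1$, and $\mathbf s_1,\dots,\mathbf s_L\in V(G_n)_r$ with $a=|\bigcup_{j=1}^L\bar{\mathbf s}_j|$. If $p_n\in(0,1)$ satisfies $\limsup_{n\to\infty}p_n<1$, then $$p_n^a\lesssim_r\mathbb E|Z_{\mathbf s_1}Z_{\mathbf s_2}\cdots Z_{\mathbf s_L}|\le(L+2)!\,p_n^a.$$
   Context: $V(G_n)$ is a finite vertex set; $V(G_n)_r$ is the set of $r$-tuples of distinct elements, $\bar{\mathbf s}$ the set of entries. $\{X_v\}$ are i.i.d. Bernoulli$(p_n)$, $X_{\mathbf s}=\prod_{u=1}^rX_{s_u}$, $Z_{\mathbf s}=X_{\mathbf s}-p_n^r$. $\lesssim_r$ means up to a positive constant depending only on $r$ (and not on $n$). *)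

(* Defs.v *)
From mathcomp Require Import all_boot all_order all_algebra.
From mathcomp Require Import all_classical all_reals all_analysis.
Set Implicit Arguments. Unset Strict Implicit. Unset Printing Implicit Defensive.
Import Order.TTheory GRing.Theory Num.Theory.
Local Open Scope ring_scope.

(* Finite probability space of i.i.d. Bernoulli(p) variables {X_v}_{v in V}:
   an outcome is x : {ffun V -> bool}, X_v = x v, with weight
   prod_v (p if x v else 1 - p). *)
Definition bern_weight (R : realType) (V : finType) (p : R) (x : {ffun V -> bool}) : R :=
  \prod_(v : V) (if x v then p else 1 - p).

Definition bern_expect (R : realType) (V : finType) (p : R) (f : {ffun V -> bool} -> R) : R :=
  \sum_(x : {ffun V -> bool}) bern_weight p x * f x.

Definition Xs (R : realType) (V : finType) (r : nat) (s : r.-tuple V) (x : {ffun V -> bool}) : R :=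
  \prod_(i < r) (x (tnth s i))%:R.

Definition Zs (R : realType) (V : finType) (p : R) (r : nat) (s : r.-tuple V) (x : {ffun V -> bool}) : R :=
  Xs R s x - p ^+ r.

Definition entries (V : finType) (r : nat) (s : r.-tuple V) : {set V} := [set v | v \in s].

(* Main.v *)
Require Import Defs.
From mathcomp Require Import all_boot all_order all_algebra.
From mathcomp Require Import all_classical all_reals all_analysis.
Import Order.TTheory GRing.Theory Num.Theory.
Local Open Scope ring_scope.

Lemma sup_bound (R : realType) (p : nat -> R)
    (hp : forall n, 0 < p n < 1) (hlimsup : limn_sup p < 1) :
  exists q : R, q < 1 /\ forall n, p n <= q.
Proof.
have bp : bounded_fun p.
  exists 1; split => // M hM x _ /=.
  have := hp x => /andP[h0 h1].
  rewrite ger0_norm ?ltW//; exact: lt_trans h1 hM.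
have ub : has_ubound (range p).
  by exists 1 => _ [n _ <-]; have := hp n => /andP[_ /ltW].
rewrite limn_supE // in hlimsup.
have [_ [N _ <-] hN] := inf_lt (ex_intro _ (sups p 0) (ex_intro2 _ _ 0%N I erefl)) hlimsup.
have hge : forall n, (N <= n)%N -> p n <= sups p N.
  move=> n hn; apply: ub_le_sup; first exact: has_ubound_sdrop.
  by exists n.
have : forall M, exists q : R, q < 1 /\ forall n, (n < M)%N -> p n <= q.
  elim=> [|K [q [hq1 hq]]]; first by exists 0; split => //.
  exists (Num.max q (p K)); split.
    by rewrite gt_max hq1; have := hp K => /andP[].
  move=> n; rewrite ltnS leq_eqVlt => /orP[/eqP->|/hq h].
    by rewrite le_max lexx orbT.
  by rewrite le_max h.
move=> /(_ N) [q [hq1 hq]].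
exists (Num.max q (sups p N)); split; first by rewrite gt_max hq1.
move=> n; case: (ltnP n N) => h.
  by rewrite le_max hq.
by rewrite le_max hge ?orbT.
Qed.

Lemma weight_ge0 (R : realType) (V : finType) (p : R) (x : {ffun V -> bool}) :
  0 <= p <= 1 -> 0 <= bern_weight p x.
Proof.
move=> /andP[p0 p1]; apply: prodr_ge0 => v _; case: (x v) => //.
by rewrite subr_ge0.
Qed.

Lemma bern_expect_le (R : realType) (V : finType) (p : R) (f g : {ffun V -> bool} -> R) :
  0 <= p <= 1 -> (forall x, f x <= g x) -> bern_expect p f <= bern_expect p g.
Proof.
move=> hp hfg; apply: ler_sum => x _; apply: ler_wpM2l; last exact: hfg.
exact: weight_ge0.
Qed.

Lemma bern_expect_scale (R : realType) (V : finType) (p c : R) (f : {ffun V -> bool} -> R) :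
  bern_expect p (fun x => c * f x) = c * bern_expect p f.
Proof.
rewrite /bern_expect mulr_sumr; apply: eq_bigr => x _.
by rewrite mulrCA.
Qed.

Lemma bern_expect_sum (R : realType) (V : finType) (p : R) (I : finType)
  (g : I -> {ffun V -> bool} -> R) :
  bern_expect p (fun x => \sum_(i : I) g i x) = \sum_(i : I) bern_expect p (g i).
Proof.
rewrite /bern_expect (eq_bigr (fun x => \sum_i bern_weight p x * g i x)).
  by rewrite exchange_big.
by move=> x _; rewrite mulr_sumr.
Qed.

Lemma bern_expect_ind (R : realType) (V : finType) (p : R) (A : {set V}) :
  bern_expect p (fun x => \prod_(v in A) ((x v)%:R : R)) = p ^+ #|A|.
Proof.
rewrite /bern_expect /bern_weight.
pose F := fun (v : V) (b : bool) => (if b then p else 1 - p) * (if v \in A then (b%:R : R) else 1).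
rewrite (eq_bigr (fun x : {ffun V -> bool} => \prod_v F v (x v))); last first.
  move=> x _; rewrite [X in _ * X]big_mkcond /= -big_split /=.
  by apply: eq_bigr.
rewrite -bigA_distr_bigA /=.
rewrite (eq_bigr (fun v => if v \in A then p else 1)); last first.
  move=> v _; rewrite big_bool /F /=; case: (v \in A) => /=.
    by rewrite mulr1 mulr0 addr0.
  by rewrite !mulr1 addrC subrK.
by rewrite -big_mkcond /= prodr_const.
Qed.

Lemma prod_ind (R : realType) (I : finType) (A : pred I) (b : I -> bool) :
  \prod_(i | A i) ((b i)%:R : R) = ([forall i, A i ==> b i])%:R.
Proof.
have [/forallP h | /forallPn [i]] := boolP [forall i, A i ==> b i].
  by apply: big1 => i Ai; rewrite (implyP (h i) Ai).
rewrite negb_imply => /andP[Ai nbi].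
by rewrite (bigD1 i) //= (negbTE nbi) mul0r.
Qed.

Lemma card_bigcup_le (T : finType) (I : finType) (P : pred I) (E : I -> {set T}) :
  (#|\bigcup_(j | P j) E j| <= \sum_(j | P j) #|E j|)%N.
Proof.
apply: (big_ind2 (fun (A : {set T}) (n : nat) => #|A| <= n)%N) => //.
  by rewrite cards0.
move=> A n B m hA hB; apply: leq_trans (leq_card_setU A B) _.
exact: leq_add.
Qed.

Lemma card_entries (V : finType) (r : nat) (s : r.-tuple V) : (#|entries s| <= r)%N.
Proof.
by rewrite /entries cardsE -{2}(size_tuple s) card_size.
Qed.

Lemma Xs_ind (R : realType) (V : finType) (r : nat) (s : r.-tuple V) x :
  Xs R s x = ([forall i, true ==> x (tnth s i)])%:R.
Proof. by rewrite /Xs -prod_ind. Qed.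

Lemma prodXs (R : realType) (V : finType) (r L : nat) (s : 'I_L -> r.-tuple V)
  (P : pred 'I_L) x :
  \prod_(j | P j) Xs R (s j) x = \prod_(v in \bigcup_(j | P j) entries (s j)) ((x v)%:R : R).
Proof.
rewrite (eq_bigr (fun j => ([forall i, true ==> x (tnth (s j) i)])%:R)); last first.
  by move=> j _; rewrite Xs_ind.
rewrite prod_ind prod_ind.
congr ((nat_of_bool _)%:R); apply/idP/idP.
  move=> /forallP h; apply/forallP => v; apply/implyP => /bigcupP [j Pj]; rewrite inE => /tnthP [i ->].
  by have /implyP/(_ Pj)/forallP/(_ i) := h j.
move=> /forallP h; apply/forallP => j; apply/implyP => Pj; apply/forallP => i /=.
apply: (implyP (h _)); apply/bigcupP; exists j => //.
by rewrite inE mem_tnth.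
Qed.

Lemma term_bound (R : realType) (V : finType) (r L : nat) (P : R)
  (s : 'I_L -> r.-tuple V) (f : {ffun 'I_L -> bool}) :
  0 <= P <= 1 ->
  bern_expect P (fun x => \prod_(j < L) (if f j then Xs R (s j) x else P ^+ r))
    <= P ^+ #|\bigcup_(j < L) entries (s j)|.
Proof.
move=> /andP[P0 P1].
have e : forall x, \prod_(j < L) (if f j then Xs R (s j) x else P ^+ r) =
   (P ^+ (\sum_(j | ~~ f j) r)%N) * \prod_(v in \bigcup_(j | f j) entries (s j)) ((x v)%:R : R).
  move=> x; rewrite (bigID (fun j => f j)) /= mulrC -prodrXr -prodXs.
  congr (_ * _); apply: eq_bigr => j.
    by move/negbTE ->.
  by move=> ->.
have -> : (fun x => \prod_(j < L) (if f j then Xs R (s j) x else P ^+ r)) =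
   (fun x => (P ^+ (\sum_(j | ~~ f j) r)%N) * \prod_(v in \bigcup_(j | f j) entries (s j)) ((x v)%:R : R)).
  by apply: funext => x; exact: e.
rewrite bern_expect_scale bern_expect_ind -exprD ler_wiXn2l //.
rewrite (bigID (fun j => f j)) /= addnC.
apply: leq_trans (leq_of_leqif (leq_card_setU _ _)) _; rewrite leq_add2l.
apply: leq_trans (card_bigcup_le _ _ _ _) _.
by apply: leq_sum => j _; exact: card_entries.
Qed.

Lemma pow2_fact (L : nat) : (2 ^ L <= (L + 2)`!)%N.
Proof.
elim: L => [//|L IH].
rewrite expnS addSn factS; apply: leq_mul => //.
by rewrite addn2.
Qed.

Theorem lemma4p2 (R : realType) (r L : nat) (hr : (1 <= r)%N) (hL : (1 <= L)%N)
    (V : nat -> finType) (p : nat -> R)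
    (hp : forall n, 0 < p n < 1) (hlimsup : limn_sup p < 1) :
  exists c : R, 0 < c /\
    forall (n : nat) (s : 'I_L -> r.-tuple (V n)),
      (forall j, uniq (s j)) ->
      let a := #|\bigcup_(j < L) entries (s j)| in
      let E := bern_expect (p n)
                 (fun x => `| \prod_(j < L) Zs (p n) (s j) x |) in
      c * p n ^+ a <= E /\ E <= (L + 2)`!%:R * p n ^+ a.
Proof.
have [q [hq1 hq]] := @sup_bound R p hp hlimsup.
exists ((1 - q) ^+ L); split; first by rewrite exprn_gt0 // subr_gt0.
move=> n s us a E; rewrite /E /a.
have /andP[P0 P1] := hp n.
have P01 : 0 <= p n <= 1 by rewrite ltW // ltW.
have Pr1 : p n ^+ r <= 1 by rewrite exprn_ile1 // ltW.
split.
  rewrite -bern_expect_ind -bern_expect_scale; apply: bern_expect_le => // x.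
  rewrite prod_ind; case h: [forall v, _ ==> _]; last by rewrite mulr0 normr_ge0.
  rewrite mulr1 normr_prod.
  rewrite (eq_bigr (fun _ => 1 - p n ^+ r)); last first.
    move=> j _; rewrite /Zs Xs_ind.
    have -> : [forall i, true ==> x (tnth (s j) i)].
      apply/forallP => i; apply/implyP => _.
      apply: (implyP (forallP h (tnth (s j) i))).
      by apply/bigcupP; exists j => //; rewrite inE mem_tnth.
    by rewrite ger0_norm // subr_ge0.
  rewrite prodr_const card_ord; apply: lerXn2r.
  - by rewrite nnegrE subr_ge0 ltW.
  - by rewrite nnegrE subr_ge0.
  rewrite lerD2l lerN2; apply: le_trans (hq n).
  by rewrite -{2}(expr1 (p n)); apply: ler_wiXn2l => //; exact: ltW.
apply: le_trans (@bern_expect_le _ _ _ _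
  (fun x => \sum_(f : {ffun 'I_L -> bool}) \prod_(j < L) (if f j then Xs R (s j) x else p n ^+ r)) P01 _) _.
  move=> x; rewrite -(@bigA_distr_bigA _ _ _ _ _ _ _ (fun (j : 'I_L) (b : bool) => if b then Xs R (s j) x else p n ^+ r)) normr_prod; apply: ler_prod => j _.
  rewrite normr_ge0 big_bool /= /Zs.
  apply: le_trans (ler_normB _ _) _.
  by rewrite ger0_norm ?Xs_ind ?ler0n // ger0_norm // exprn_ge0 // ltW.
rewrite bern_expect_sum.
apply: le_trans (ler_sum _ (fun f _ => @term_bound R _ r L (p n) s f P01)) _.
rewrite sumr_const card_ffun card_bool card_ord -[_ *+ _]mulr_natl.
apply: ler_wpM2r; first by rewrite exprn_ge0 // ltW.
by rewrite ler_nat pow2_fact.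
Qed.
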